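(* Let $H=\frac12(y_1^2+y_2^2)-(x_1^2+x_2^2)+(x_1^2+x_2^2)^2$ on $\mathbb{R}^4$ with symplectic form $dx_1\wedge dy_1+dx_2\wedge dy_2$. Introduce symplectic coordinates $(q_1,q_2,p_1,p_2)$ by first rescaling $x_{j}\to 2^{-1/4}x_{j}$, $y_{j}\to 2^{1/4}y_{j}$ ($j=1,2$), and then setting $x_j=\frac{1}{\sqrt2}(q_j-p_j)$, $y_j=\frac{1}{\sqrt2}(q_j+p_j)$. In these coordinates $H=\sqrt2\,J_1+\frac18\left(q_1^2+q_2^2+p_1^2+p_2^2-2J_1\right)^2$, where $J_1=q_1p_1+q_2p_2$ and $J_2=q_1p_2-q_2p_1$ (the latter being the angular momentum $x_1y_2-x_2y_1$). Then the Birkhoff normal form of $H$ at the focus-focus equilibrium $(0,0)$ is the function of $(J_1,J_2)$ $$\overline{H}=\sqrt2\,J_1+\frac14(3J_1^2+J_2^2)-\frac{\sqrt2}{32}J_1(17J_1^2+9J_2^2)+\frac{1}{256}(375J_1^4+258J_1^2J_2^2+11J_2^4)-\frac{\sqrt2}{4096}J_1(10689J_1^4+8910J_1^2J_2^2+909J_2^4)+O(J^6).$$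
   Context: The Birkhoff normal form here means: there is a near-identity symplectic change of variables (generated by Lie series in the Deprit formalism, with the quadratic part $H_2=\sqrt2 J_1$ fixed) after which the Hamiltonian, written in the new coordinates $(q,p)$, depends only on $J_1=q_1p_1+q_2p_2$ and $J_2=q_1p_2-q_2p_1$, i.e. Poisson commutes with $J_1$ and $J_2$. The normal form is unique for this normalization. $O(J^6)$ denotes terms homogeneous of degree at least $6$ in the phase space variables (degree at least $3$ in $(J_1,J_2)$ beyond those displayed). *)

(* Defs.v *)
(* multivariate polynomials (multinomials' mpoly) over a
   real closed field R (so that sqrt 2 and 2^(1/4) exist). *)
From mathcomp Require Import all_boot all_algebra.
From mathcomp Require Import mpoly.
Set Implicit Arguments. Unset Strict Implicit. Unset Printing Implicit Defensive.
Import GRing.Theory Num.Theory.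
Local Open Scope ring_scope.

Section BNF.
Variable R : rcfType.

Definition v0 : 'I_4 := @Ordinal 4 0 isT.
Definition v1 : 'I_4 := @Ordinal 4 1 isT.
Definition v2 : 'I_4 := @Ordinal 4 2 isT.
Definition v3 : 'I_4 := @Ordinal 4 3 isT.

(* In the (q,p) chart: X_0 = q1, X_1 = q2, X_2 = p1, X_3 = p2.
   In the original chart: X_0 = x1, X_1 = x2, X_2 = y1, X_3 = y2. *)
Definition q1 : {mpoly R[4]} := 'X_v0.
Definition q2 : {mpoly R[4]} := 'X_v1.
Definition p1 : {mpoly R[4]} := 'X_v2.
Definition p2 : {mpoly R[4]} := 'X_v3.

Definition sqrt2 : R := Num.sqrt 2.
Definition root4_2 : R := Num.sqrt (Num.sqrt 2).

Definition Hxy : {mpoly R[4]} :=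
  let x1 := 'X_v0 in let x2 := 'X_v1 in let y1 := 'X_v2 in let y2 := 'X_v3 in
  (2%:R^-1)%:MP * (y1 ^+ 2 + y2 ^+ 2) - (x1 ^+ 2 + x2 ^+ 2)
  + (x1 ^+ 2 + x2 ^+ 2) ^+ 2.

(* Coordinate change: x_j -> 2^(-1/4) x_j, y_j -> 2^(1/4) y_j, then
   x_j = (q_j - p_j)/sqrt2, y_j = (q_j + p_j)/sqrt2.  The old variables
   expressed in the new ones (x1, x2, y1, y2 in this order): *)
Definition chg : 4.-tuple {mpoly R[4]} :=
  [tuple (root4_2^-1 / sqrt2)%:MP * (q1 - p1);
         (root4_2^-1 / sqrt2)%:MP * (q2 - p2);
         (root4_2 / sqrt2)%:MP * (q1 + p1);
         (root4_2 / sqrt2)%:MP * (q2 + p2)].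

Definition J1 : {mpoly R[4]} := q1 * p1 + q2 * p2.
Definition J2 : {mpoly R[4]} := q1 * p2 - q2 * p1.

Definition Hqp : {mpoly R[4]} :=
  sqrt2%:MP * J1
  + (8%:R^-1)%:MP * (q1 ^+ 2 + q2 ^+ 2 + p1 ^+ 2 + p2 ^+ 2 - 2%:R%:MP * J1) ^+ 2.

Definition pbracket (f g : {mpoly R[4]}) : {mpoly R[4]} :=
  mderiv v0 f * mderiv v2 g - mderiv v2 f * mderiv v0 g
  + (mderiv v1 f * mderiv v3 g - mderiv v3 f * mderiv v1 g).

(* Truncated Lie series exp(L_W) H = sum_{k<N} 1/k! {..{H,W},..,W}
   (Deprit formalism: H composed with the time-one flow of W). *)
Definition lie_series (W H : {mpoly R[4]}) (N : nat) : {mpoly R[4]} :=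
  \sum_(k < N) (k`!%:R^-1) *: iter k (fun f => pbracket f W) H.

Definition ord_ge (d : nat) (p : {mpoly R[4]}) : Prop :=
  forall m : 'X_{1..4}, (mdeg m < d)%N -> p@_m = 0.

Definition Hbar : {mpoly R[4]} :=
  sqrt2%:MP * J1
  + (4%:R^-1)%:MP * (3%:R%:MP * J1 ^+ 2 + J2 ^+ 2)
  - (sqrt2 / 32%:R)%:MP * J1 * (17%:R%:MP * J1 ^+ 2 + 9%:R%:MP * J2 ^+ 2)
  + (256%:R^-1)%:MP * (375%:R%:MP * J1 ^+ 4 + 258%:R%:MP * J1 ^+ 2 * J2 ^+ 2
                        + 11%:R%:MP * J2 ^+ 4)
  - (sqrt2 / 4096%:R)%:MP * J1 * (10689%:R%:MP * J1 ^+ 4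
                        + 8910%:R%:MP * J1 ^+ 2 * J2 ^+ 2 + 909%:R%:MP * J2 ^+ 4).

End BNF.

(* Main.v *)
From Stdlib Require Import ZArith QArith.
Require Import Defs.
From HB Require Import structures.
From mathcomp Require Import all_boot all_algebra.
From mathcomp Require Import mpoly.
From mathcomp Require Import zify ssrZ ring.
Close Scope Q_scope. Close Scope Z_scope.
Set Implicit Arguments. Unset Strict Implicit. Unset Printing Implicit Defensive.
Import GRing.Theory Num.Theory.
Set Implicit Arguments. Unset Strict Implicit. Unset Printing Implicit Defensive.

Definition C := (Q * Q)%type.
Definition cadd (x y : C) : C := (Qred (Qplus x.1 y.1), Qred (Qplus x.2 y.2)).
Definition cmulc (x y : C) : C :=
  (Qred (Qplus (Qmult x.1 y.1) (Qmult (Qmake 2 1) (Qmult x.2 y.2))),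
   Qred (Qplus (Qmult x.1 y.2) (Qmult x.2 y.1))).
Definition cis0 (x : C) : bool := Qeq_bool x.1 (Qmake 0 1) && Qeq_bool x.2 (Qmake 0 1).
Definition mono := (nat * nat * nat * nat)%type.
Definition madd (m n : mono) : mono :=
  let '(a,b,c,d) := m in let '(a',b',c',d') := n in (a+a', b+b', c+c', d+d')%N.
Definition mdegc (m : mono) : nat := let '(a,b,c,d) := m in (a+b+c+d)%N.
Definition P := seq (mono * C).
Definition pmul (p q : P) : P := [seq (madd x.1 y.1, cmulc x.2 y.2) | x <- p, y <- q].
Definition ptrunc N (p : P) : P := [seq x <- p | (mdegc x.1 < N)%N].
Definition pscale (c : C) (p : P) : P := [seq (x.1, cmulc c x.2) | x <- p].
Definition pneg (p : P) : P := pscale (Qmake (-1) 1, Qmake 0 1) p.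
Definition mexp (i : nat) (m : mono) : nat :=
  let '(a,b,c,d) := m in match i with O => a | S O => b | S (S O) => c | _ => d end.
Definition mdec (i : nat) (m : mono) : mono :=
  let '(a,b,c,d) := m in match i with O => (a.-1,b,c,d) | S O => (a,b.-1,c,d)
    | S (S O) => (a,b,c.-1,d) | _ => (a,b,c,d.-1) end.
Definition pder (i : nat) (p : P) : P :=
  [seq (mdec i x.1, cmulc (Qmake (Z.of_nat (mexp i x.1)) 1, Qmake 0 1) x.2) | x <- p].
Definition lem (m n : mono) : bool :=
  let '(a,b,c,d) := m in let '(a',b',c',d') := n in
  (a < a') || ((a == a') && ((b < b') || ((b == b') && ((c < c') || ((c == c') && (d <= d')))))).
Definition cstep (x : mono * C) (acc : P) : P :=
  match acc with
  | y :: t => if x.1 == y.1 then (x.1, cadd x.2 y.2) :: t else x :: acc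
  | [::] => [:: x] end.
Definition combine (p : P) : P := foldr cstep [::] p.
Definition pnorm (p : P) : P := [seq x <- combine (sort (fun x y : mono * C => lem x.1 y.1) p) | ~~ cis0 x.2].
Definition cbrr (p w : P) : P :=
  pmul (pder 0 p) (pder 2 w) ++ pneg (pmul (pder 2 p) (pder 0 w)) ++
  (pmul (pder 1 p) (pder 3 w) ++ pneg (pmul (pder 3 p) (pder 1 w))).
Definition cbr (p w : P) : P := pnorm (ptrunc 12 (cbrr p w)).
Definition punit : P := [:: ((0,0,0,0)%N, (Qmake 1 1, Qmake 0 1))].
Definition pconst (c : C) : P := [:: ((0,0,0,0)%N, c)].
Definition ppow (p : P) (n : nat) : P := iter n (pmul p) punit.
Definition pvar (i : nat) : P :=
  [:: (match i with O => (1,0,0,0) | S O => (0,1,0,0) | S (S O) => (0,0,1,0) | _ => (0,0,0,1) end%N,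
       (Qmake 1 1, Qmake 0 1))].
Fixpoint factp (n : nat) : positive :=
  match n with O => 1%positive | S k => (Pos.of_succ_nat k * factp k)%positive end.
Definition ck (n : nat) : C := (Qmake 1 (factp n), Qmake 0 1).
Definition cW : P := [::
  ((0,0,0,4),(Qmake (0) 1,Qmake (-1) 64));
  ((0,0,0,6),(Qmake (1) 384,Qmake (0) 1));
  ((0,0,0,8),(Qmake (0) 1,Qmake (3) 8192));
  ((0,0,0,10),(Qmake (-7) 24576,Qmake (0) 1));
  ((0,0,2,2),(Qmake (0) 1,Qmake (-1) 32));
  ((0,0,2,4),(Qmake (1) 128,Qmake (0) 1));
  ((0,0,2,6),(Qmake (0) 1,Qmake (3) 2048));
  ((0,0,2,8),(Qmake (-35) 24576,Qmake (0) 1));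
  ((0,0,4,0),(Qmake (0) 1,Qmake (-1) 64));
  ((0,0,4,2),(Qmake (1) 128,Qmake (0) 1));
  ((0,0,4,4),(Qmake (0) 1,Qmake (9) 4096));
  ((0,0,4,6),(Qmake (-35) 12288,Qmake (0) 1));
  ((0,0,6,0),(Qmake (1) 384,Qmake (0) 1));
  ((0,0,6,2),(Qmake (0) 1,Qmake (3) 2048));
  ((0,0,6,4),(Qmake (-35) 12288,Qmake (0) 1));
  ((0,0,8,0),(Qmake (0) 1,Qmake (3) 8192));
  ((0,0,8,2),(Qmake (-35) 24576,Qmake (0) 1));
  ((0,0,10,0),(Qmake (-7) 24576,Qmake (0) 1));
  ((0,1,0,3),(Qmake (0) 1,Qmake (1) 8));
  ((0,1,0,5),(Qmake (3) 128,Qmake (0) 1));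
  ((0,1,0,7),(Qmake (0) 1,Qmake (-23) 2048));
  ((0,1,0,9),(Qmake (-97) 65536,Qmake (0) 1));
  ((0,1,2,1),(Qmake (0) 1,Qmake (1) 8));
  ((0,1,2,3),(Qmake (3) 64,Qmake (0) 1));
  ((0,1,2,5),(Qmake (0) 1,Qmake (-69) 2048));
  ((0,1,2,7),(Qmake (-97) 16384,Qmake (0) 1));
  ((0,1,4,1),(Qmake (3) 128,Qmake (0) 1));
  ((0,1,4,3),(Qmake (0) 1,Qmake (-69) 2048));
  ((0,1,4,5),(Qmake (-291) 32768,Qmake (0) 1));
  ((0,1,6,1),(Qmake (0) 1,Qmake (-23) 2048));
  ((0,1,6,3),(Qmake (-97) 16384,Qmake (0) 1));
  ((0,1,8,1),(Qmake (-97) 65536,Qmake (0) 1));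
  ((0,2,0,4),(Qmake (-33) 128,Qmake (0) 1));
  ((0,2,0,6),(Qmake (0) 1,Qmake (-17) 1024));
  ((0,2,0,8),(Qmake (591) 8192,Qmake (0) 1));
  ((0,2,2,2),(Qmake (-9) 32,Qmake (0) 1));
  ((0,2,2,4),(Qmake (0) 1,Qmake (-37) 1024));
  ((0,2,2,6),(Qmake (2705) 12288,Qmake (0) 1));
  ((0,2,4,0),(Qmake (-3) 128,Qmake (0) 1));
  ((0,2,4,2),(Qmake (0) 1,Qmake (-23) 1024));
  ((0,2,4,4),(Qmake (233) 1024,Qmake (0) 1));
  ((0,2,6,0),(Qmake (0) 1,Qmake (-3) 1024));
  ((0,2,6,2),(Qmake (341) 4096,Qmake (0) 1));
  ((0,2,8,0),(Qmake (91) 24576,Qmake (0) 1));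
  ((0,3,0,1),(Qmake (0) 1,Qmake (-1) 8));
  ((0,3,0,5),(Qmake (0) 1,Qmake (845) 2048));
  ((0,3,0,7),(Qmake (-1271) 49152,Qmake (0) 1));
  ((0,3,2,3),(Qmake (0) 1,Qmake (255) 512));
  ((0,3,2,5),(Qmake (-1829) 49152,Qmake (0) 1));
  ((0,3,4,1),(Qmake (0) 1,Qmake (175) 2048));
  ((0,3,4,3),(Qmake (155) 49152,Qmake (0) 1));
  ((0,3,6,1),(Qmake (713) 49152,Qmake (0) 1));
  ((0,4,0,0),(Qmake (0) 1,Qmake (1) 64));
  ((0,4,0,2),(Qmake (33) 128,Qmake (0) 1));
  ((0,4,0,6),(Qmake (-1237) 768,Qmake (0) 1));
  ((0,4,2,0),(Qmake (3) 128,Qmake (0) 1));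
  ((0,4,2,4),(Qmake (-1651) 768,Qmake (0) 1));
  ((0,4,4,2),(Qmake (-567) 1024,Qmake (0) 1));
  ((0,4,6,0),(Qmake (-15) 1024,Qmake (0) 1));
  ((0,5,0,1),(Qmake (-3) 128,Qmake (0) 1));
  ((0,5,0,3),(Qmake (0) 1,Qmake (-845) 2048));
  ((0,5,2,1),(Qmake (0) 1,Qmake (-175) 2048));
  ((0,6,0,0),(Qmake (-1) 384,Qmake (0) 1));
  ((0,6,0,2),(Qmake (0) 1,Qmake (17) 1024));
  ((0,6,0,4),(Qmake (1237) 768,Qmake (0) 1));
  ((0,6,2,0),(Qmake (0) 1,Qmake (3) 1024));
  ((0,6,2,2),(Qmake (69) 128,Qmake (0) 1));
  ((0,6,4,0),(Qmake (15) 1024,Qmake (0) 1));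
  ((0,7,0,1),(Qmake (0) 1,Qmake (23) 2048));
  ((0,7,0,3),(Qmake (1271) 49152,Qmake (0) 1));
  ((0,7,2,1),(Qmake (-713) 49152,Qmake (0) 1));
  ((0,8,0,0),(Qmake (0) 1,Qmake (-3) 8192));
  ((0,8,0,2),(Qmake (-591) 8192,Qmake (0) 1));
  ((0,8,2,0),(Qmake (-91) 24576,Qmake (0) 1));
  ((0,9,0,1),(Qmake (97) 65536,Qmake (0) 1));
  ((0,10,0,0),(Qmake (7) 24576,Qmake (0) 1));
  ((1,0,1,2),(Qmake (0) 1,Qmake (1) 8));
  ((1,0,1,4),(Qmake (3) 128,Qmake (0) 1));
  ((1,0,1,6),(Qmake (0) 1,Qmake (-23) 2048));
  ((1,0,1,8),(Qmake (-97) 65536,Qmake (0) 1));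
  ((1,0,3,0),(Qmake (0) 1,Qmake (1) 8));
  ((1,0,3,2),(Qmake (3) 64,Qmake (0) 1));
  ((1,0,3,4),(Qmake (0) 1,Qmake (-69) 2048));
  ((1,0,3,6),(Qmake (-97) 16384,Qmake (0) 1));
  ((1,0,5,0),(Qmake (3) 128,Qmake (0) 1));
  ((1,0,5,2),(Qmake (0) 1,Qmake (-69) 2048));
  ((1,0,5,4),(Qmake (-291) 32768,Qmake (0) 1));
  ((1,0,7,0),(Qmake (0) 1,Qmake (-23) 2048));
  ((1,0,7,2),(Qmake (-97) 16384,Qmake (0) 1));
  ((1,0,9,0),(Qmake (-97) 65536,Qmake (0) 1));
  ((1,1,1,3),(Qmake (-15) 32,Qmake (0) 1));
  ((1,1,1,5),(Qmake (0) 1,Qmake (-7) 256));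
  ((1,1,1,7),(Qmake (841) 6144,Qmake (0) 1));
  ((1,1,3,1),(Qmake (-15) 32,Qmake (0) 1));
  ((1,1,3,3),(Qmake (0) 1,Qmake (-7) 128));
  ((1,1,3,5),(Qmake (841) 2048,Qmake (0) 1));
  ((1,1,5,1),(Qmake (0) 1,Qmake (-7) 256));
  ((1,1,5,3),(Qmake (841) 2048,Qmake (0) 1));
  ((1,1,7,1),(Qmake (841) 6144,Qmake (0) 1));
  ((1,2,1,0),(Qmake (0) 1,Qmake (-1) 8));
  ((1,2,1,4),(Qmake (0) 1,Qmake (2185) 2048));
  ((1,2,1,6),(Qmake (-5239) 49152,Qmake (0) 1));
  ((1,2,3,2),(Qmake (0) 1,Qmake (295) 256));
  ((1,2,3,4),(Qmake (-3255) 16384,Qmake (0) 1));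
  ((1,2,5,0),(Qmake (0) 1,Qmake (175) 2048));
  ((1,2,5,2),(Qmake (-1271) 16384,Qmake (0) 1));
  ((1,2,7,0),(Qmake (713) 49152,Qmake (0) 1));
  ((1,3,1,1),(Qmake (15) 32,Qmake (0) 1));
  ((1,3,1,5),(Qmake (-515) 96,Qmake (0) 1));
  ((1,3,3,3),(Qmake (-4903) 768,Qmake (0) 1));
  ((1,3,5,1),(Qmake (-261) 256,Qmake (0) 1));
  ((1,4,1,0),(Qmake (-3) 128,Qmake (0) 1));
  ((1,4,1,2),(Qmake (0) 1,Qmake (-2185) 2048));
  ((1,4,3,0),(Qmake (0) 1,Qmake (-175) 2048));
  ((1,5,1,1),(Qmake (0) 1,Qmake (7) 256));
  ((1,5,1,3),(Qmake (515) 96,Qmake (0) 1));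
  ((1,5,3,1),(Qmake (261) 256,Qmake (0) 1));
  ((1,6,1,0),(Qmake (0) 1,Qmake (23) 2048));
  ((1,6,1,2),(Qmake (5239) 49152,Qmake (0) 1));
  ((1,6,3,0),(Qmake (-713) 49152,Qmake (0) 1));
  ((1,7,1,1),(Qmake (-841) 6144,Qmake (0) 1));
  ((1,8,1,0),(Qmake (97) 65536,Qmake (0) 1));
  ((2,0,0,4),(Qmake (-3) 128,Qmake (0) 1));
  ((2,0,0,6),(Qmake (0) 1,Qmake (-3) 1024));
  ((2,0,0,8),(Qmake (91) 24576,Qmake (0) 1));
  ((2,0,2,2),(Qmake (-9) 32,Qmake (0) 1));
  ((2,0,2,4),(Qmake (0) 1,Qmake (-23) 1024));
  ((2,0,2,6),(Qmake (341) 4096,Qmake (0) 1));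
  ((2,0,4,0),(Qmake (-33) 128,Qmake (0) 1));
  ((2,0,4,2),(Qmake (0) 1,Qmake (-37) 1024));
  ((2,0,4,4),(Qmake (233) 1024,Qmake (0) 1));
  ((2,0,6,0),(Qmake (0) 1,Qmake (-17) 1024));
  ((2,0,6,2),(Qmake (2705) 12288,Qmake (0) 1));
  ((2,0,8,0),(Qmake (591) 8192,Qmake (0) 1));
  ((2,1,0,1),(Qmake (0) 1,Qmake (-1) 8));
  ((2,1,0,5),(Qmake (0) 1,Qmake (175) 2048));
  ((2,1,0,7),(Qmake (713) 49152,Qmake (0) 1));
  ((2,1,2,3),(Qmake (0) 1,Qmake (295) 256));
  ((2,1,2,5),(Qmake (-1271) 16384,Qmake (0) 1));
  ((2,1,4,1),(Qmake (0) 1,Qmake (2185) 2048));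
  ((2,1,4,3),(Qmake (-3255) 16384,Qmake (0) 1));
  ((2,1,6,1),(Qmake (-5239) 49152,Qmake (0) 1));
  ((2,2,0,0),(Qmake (0) 1,Qmake (1) 32));
  ((2,2,0,2),(Qmake (9) 32,Qmake (0) 1));
  ((2,2,0,6),(Qmake (-69) 128,Qmake (0) 1));
  ((2,2,2,0),(Qmake (9) 32,Qmake (0) 1));
  ((2,2,2,4),(Qmake (-4165) 512,Qmake (0) 1));
  ((2,2,4,2),(Qmake (-4165) 512,Qmake (0) 1));
  ((2,2,6,0),(Qmake (-69) 128,Qmake (0) 1));
  ((2,3,0,1),(Qmake (-3) 64,Qmake (0) 1));
  ((2,3,0,3),(Qmake (0) 1,Qmake (-255) 512));
  ((2,3,2,1),(Qmake (0) 1,Qmake (-295) 256));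
  ((2,4,0,0),(Qmake (-1) 128,Qmake (0) 1));
  ((2,4,0,2),(Qmake (0) 1,Qmake (37) 1024));
  ((2,4,0,4),(Qmake (1651) 768,Qmake (0) 1));
  ((2,4,2,0),(Qmake (0) 1,Qmake (23) 1024));
  ((2,4,2,2),(Qmake (4165) 512,Qmake (0) 1));
  ((2,4,4,0),(Qmake (567) 1024,Qmake (0) 1));
  ((2,5,0,1),(Qmake (0) 1,Qmake (69) 2048));
  ((2,5,0,3),(Qmake (1829) 49152,Qmake (0) 1));
  ((2,5,2,1),(Qmake (1271) 16384,Qmake (0) 1));
  ((2,6,0,0),(Qmake (0) 1,Qmake (-3) 2048));
  ((2,6,0,2),(Qmake (-2705) 12288,Qmake (0) 1));
  ((2,6,2,0),(Qmake (-341) 4096,Qmake (0) 1));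
  ((2,7,0,1),(Qmake (97) 16384,Qmake (0) 1));
  ((2,8,0,0),(Qmake (35) 24576,Qmake (0) 1));
  ((3,0,1,0),(Qmake (0) 1,Qmake (-1) 8));
  ((3,0,1,4),(Qmake (0) 1,Qmake (175) 2048));
  ((3,0,1,6),(Qmake (713) 49152,Qmake (0) 1));
  ((3,0,3,2),(Qmake (0) 1,Qmake (255) 512));
  ((3,0,3,4),(Qmake (155) 49152,Qmake (0) 1));
  ((3,0,5,0),(Qmake (0) 1,Qmake (845) 2048));
  ((3,0,5,2),(Qmake (-1829) 49152,Qmake (0) 1));
  ((3,0,7,0),(Qmake (-1271) 49152,Qmake (0) 1));
  ((3,1,1,1),(Qmake (15) 32,Qmake (0) 1));
  ((3,1,1,5),(Qmake (-261) 256,Qmake (0) 1));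
  ((3,1,3,3),(Qmake (-4903) 768,Qmake (0) 1));
  ((3,1,5,1),(Qmake (-515) 96,Qmake (0) 1));
  ((3,2,1,0),(Qmake (-3) 64,Qmake (0) 1));
  ((3,2,1,2),(Qmake (0) 1,Qmake (-295) 256));
  ((3,2,3,0),(Qmake (0) 1,Qmake (-255) 512));
  ((3,3,1,1),(Qmake (0) 1,Qmake (7) 128));
  ((3,3,1,3),(Qmake (4903) 768,Qmake (0) 1));
  ((3,3,3,1),(Qmake (4903) 768,Qmake (0) 1));
  ((3,4,1,0),(Qmake (0) 1,Qmake (69) 2048));
  ((3,4,1,2),(Qmake (3255) 16384,Qmake (0) 1));
  ((3,4,3,0),(Qmake (-155) 49152,Qmake (0) 1));
  ((3,5,1,1),(Qmake (-841) 2048,Qmake (0) 1));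
  ((3,6,1,0),(Qmake (97) 16384,Qmake (0) 1));
  ((4,0,0,0),(Qmake (0) 1,Qmake (1) 64));
  ((4,0,0,2),(Qmake (3) 128,Qmake (0) 1));
  ((4,0,0,6),(Qmake (-15) 1024,Qmake (0) 1));
  ((4,0,2,0),(Qmake (33) 128,Qmake (0) 1));
  ((4,0,2,4),(Qmake (-567) 1024,Qmake (0) 1));
  ((4,0,4,2),(Qmake (-1651) 768,Qmake (0) 1));
  ((4,0,6,0),(Qmake (-1237) 768,Qmake (0) 1));
  ((4,1,0,1),(Qmake (-3) 128,Qmake (0) 1));
  ((4,1,0,3),(Qmake (0) 1,Qmake (-175) 2048));
  ((4,1,2,1),(Qmake (0) 1,Qmake (-2185) 2048));
  ((4,2,0,0),(Qmake (-1) 128,Qmake (0) 1));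
  ((4,2,0,2),(Qmake (0) 1,Qmake (23) 1024));
  ((4,2,0,4),(Qmake (567) 1024,Qmake (0) 1));
  ((4,2,2,0),(Qmake (0) 1,Qmake (37) 1024));
  ((4,2,2,2),(Qmake (4165) 512,Qmake (0) 1));
  ((4,2,4,0),(Qmake (1651) 768,Qmake (0) 1));
  ((4,3,0,1),(Qmake (0) 1,Qmake (69) 2048));
  ((4,3,0,3),(Qmake (-155) 49152,Qmake (0) 1));
  ((4,3,2,1),(Qmake (3255) 16384,Qmake (0) 1));
  ((4,4,0,0),(Qmake (0) 1,Qmake (-9) 4096));
  ((4,4,0,2),(Qmake (-233) 1024,Qmake (0) 1));
  ((4,4,2,0),(Qmake (-233) 1024,Qmake (0) 1));
  ((4,5,0,1),(Qmake (291) 32768,Qmake (0) 1));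
  ((4,6,0,0),(Qmake (35) 12288,Qmake (0) 1));
  ((5,0,1,0),(Qmake (-3) 128,Qmake (0) 1));
  ((5,0,1,2),(Qmake (0) 1,Qmake (-175) 2048));
  ((5,0,3,0),(Qmake (0) 1,Qmake (-845) 2048));
  ((5,1,1,1),(Qmake (0) 1,Qmake (7) 256));
  ((5,1,1,3),(Qmake (261) 256,Qmake (0) 1));
  ((5,1,3,1),(Qmake (515) 96,Qmake (0) 1));
  ((5,2,1,0),(Qmake (0) 1,Qmake (69) 2048));
  ((5,2,1,2),(Qmake (1271) 16384,Qmake (0) 1));
  ((5,2,3,0),(Qmake (1829) 49152,Qmake (0) 1));
  ((5,3,1,1),(Qmake (-841) 2048,Qmake (0) 1));
  ((5,4,1,0),(Qmake (291) 32768,Qmake (0) 1));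
  ((6,0,0,0),(Qmake (-1) 384,Qmake (0) 1));
  ((6,0,0,2),(Qmake (0) 1,Qmake (3) 1024));
  ((6,0,0,4),(Qmake (15) 1024,Qmake (0) 1));
  ((6,0,2,0),(Qmake (0) 1,Qmake (17) 1024));
  ((6,0,2,2),(Qmake (69) 128,Qmake (0) 1));
  ((6,0,4,0),(Qmake (1237) 768,Qmake (0) 1));
  ((6,1,0,1),(Qmake (0) 1,Qmake (23) 2048));
  ((6,1,0,3),(Qmake (-713) 49152,Qmake (0) 1));
  ((6,1,2,1),(Qmake (5239) 49152,Qmake (0) 1));
  ((6,2,0,0),(Qmake (0) 1,Qmake (-3) 2048));
  ((6,2,0,2),(Qmake (-341) 4096,Qmake (0) 1));
  ((6,2,2,0),(Qmake (-2705) 12288,Qmake (0) 1));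
  ((6,3,0,1),(Qmake (97) 16384,Qmake (0) 1));
  ((6,4,0,0),(Qmake (35) 12288,Qmake (0) 1));
  ((7,0,1,0),(Qmake (0) 1,Qmake (23) 2048));
  ((7,0,1,2),(Qmake (-713) 49152,Qmake (0) 1));
  ((7,0,3,0),(Qmake (1271) 49152,Qmake (0) 1));
  ((7,1,1,1),(Qmake (-841) 6144,Qmake (0) 1));
  ((7,2,1,0),(Qmake (97) 16384,Qmake (0) 1));
  ((8,0,0,0),(Qmake (0) 1,Qmake (-3) 8192));
  ((8,0,0,2),(Qmake (-91) 24576,Qmake (0) 1));
  ((8,0,2,0),(Qmake (-591) 8192,Qmake (0) 1));
  ((8,1,0,1),(Qmake (97) 65536,Qmake (0) 1));
  ((8,2,0,0),(Qmake (35) 24576,Qmake (0) 1));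
  ((9,0,1,0),(Qmake (97) 65536,Qmake (0) 1));
  ((10,0,0,0),(Qmake (7) 24576,Qmake (0) 1))].
Definition cq1 := pvar 0. Definition cq2 := pvar 1. Definition cp1 := pvar 2. Definition cp2 := pvar 3.
Definition cJ1 := pmul cq1 cp1 ++ pmul cq2 cp2.
Definition cJ2 := pmul cq1 cp2 ++ pneg (pmul cq2 cp1).
Definition cnat (n : nat) : C := (Qmake (Z.of_nat n) 1, Qmake 0 1).
Definition cHqp : P :=
  pmul (pconst (Qmake 0 1, Qmake 1 1)) cJ1 ++
  pmul (pconst (Qmake 1 8, Qmake 0 1))
    (ppow (ppow cq1 2 ++ ppow cq2 2 ++ ppow cp1 2 ++ ppow cp2 2 ++ pneg (pmul (pconst (cnat 2)) cJ1)) 2).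
Definition cHxy : P :=
  pmul (pconst (Qmake 1 2, Qmake 0 1))
     (pmul (pconst (Qmake 0 1, Qmake 1 2)) (ppow (cq1 ++ cp1) 2)
      ++ pmul (pconst (Qmake 0 1, Qmake 1 2)) (ppow (cq2 ++ cp2) 2))
  ++ pneg (pmul (pconst (Qmake 0 1, Qmake 1 4)) (ppow (cq1 ++ pneg cp1) 2)
      ++ pmul (pconst (Qmake 0 1, Qmake 1 4)) (ppow (cq2 ++ pneg cp2) 2))
  ++ ppow (pmul (pconst (Qmake 0 1, Qmake 1 4)) (ppow (cq1 ++ pneg cp1) 2)
      ++ pmul (pconst (Qmake 0 1, Qmake 1 4)) (ppow (cq2 ++ pneg cp2) 2)) 2.
Definition cHbar : P :=
  pmul (pconst (Qmake 0 1, Qmake 1 1)) cJ1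
  ++ pmul (pconst (Qmake 1 4, Qmake 0 1)) (pmul (pconst (cnat 3)) (ppow cJ1 2) ++ ppow cJ2 2)
  ++ pneg (pmul (pmul (pconst (Qmake 0 1, Qmake 1 32)) cJ1)
        (pmul (pconst (cnat 17)) (ppow cJ1 2) ++ pmul (pconst (cnat 9)) (ppow cJ2 2)))
  ++ pmul (pconst (Qmake 1 256, Qmake 0 1)) (pmul (pconst (cnat 375)) (ppow cJ1 4)
        ++ pmul (pmul (pconst (cnat 258)) (ppow cJ1 2)) (ppow cJ2 2) ++ pmul (pconst (cnat 11)) (ppow cJ2 4))
  ++ pneg (pmul (pmul (pconst (Qmake 0 1, Qmake 1 4096)) cJ1)
        (pmul (pconst (cnat 10689)) (ppow cJ1 4)
        ++ pmul (pmul (pconst (cnat 8910)) (ppow cJ1 2)) (ppow cJ2 2) ++ pmul (pconst (cnat 909)) (ppow cJ2 4))).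
Definition citer k := iter k (fun p => cbr p cW) (pnorm cHqp).
Fixpoint csumA n k t := match n with O => [::] | S n' => pscale (ck k) t ++ csumA n' k.+1 (cbr t cW) end.
Local Open Scope ring_scope.

Definition Q_eqb (x y : Q) : bool :=
  Z.eqb (Qnum x) (Qnum y) && Pos.eqb (Qden x) (Qden y).
Lemma Q_eqP : Equality.axiom Q_eqb.
Proof.
move=> [a p] [b q]; rewrite /Q_eqb /=; apply: (iffP andP).
  by case=> /Z.eqb_eq -> /Pos.eqb_eq ->.
by case=> -> ->; split; [apply/Z.eqb_eq | apply/Pos.eqb_eq].
Qed.
HB.instance Definition _ := hasDecEq.Build Q Q_eqP.

Section Sem.
Variable R : rcfType.

Lemma int_of_ZD x y : int_of_Z (Z.add x y) = (int_of_Z x + int_of_Z y)%R.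
Proof. lia. Qed.
Lemma int_of_ZM x y : int_of_Z (Z.mul x y) = (int_of_Z x * int_of_Z y)%R.
Proof. lia. Qed.

Definition Zr (z : Z) : R := (int_of_Z z)%:~R.
Lemma Zr_add x y : Zr (Z.add x y) = Zr x + Zr y.
Proof. by rewrite /Zr int_of_ZD intrD. Qed.
Lemma Zr_mul x y : Zr (Z.mul x y) = Zr x * Zr y.
Proof. by rewrite /Zr int_of_ZM intrM. Qed.
Lemma Zr_pos p : Zr (Zpos p) = (Pos.to_nat p)%:R.
Proof. by []. Qed.
Lemma Zr_pos_neq0 p : Zr (Zpos p) != 0.
Proof. rewrite Zr_pos pnatr_eq0; apply/eqP; lia. Qed.
Lemma Zr_nat n : Zr (Z.of_nat n) = n%:R.
Proof. by case: n => // n; rewrite /Zr /= SuccNat2Pos.id_succ. Qed.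

Definition Q2R (q : Q) : R := Zr (Qnum q) / Zr (Zpos (Qden q)).

Lemma Q2R_plus x y : Q2R (Qplus x y) = Q2R x + Q2R y.
Proof.
case: x => a p; case: y => b q; rewrite /Q2R /Qplus /=.
change (Zpos (p * q)) with (Z.mul (Zpos p) (Zpos q)).
rewrite Zr_add !Zr_mul.
have hp := Zr_pos_neq0 p; have hq := Zr_pos_neq0 q.
by field; rewrite hp hq.
Qed.
Lemma Q2R_mult x y : Q2R (Qmult x y) = Q2R x * Q2R y.
Proof.
case: x => a p; case: y => b q; rewrite /Q2R /Qmult /=.
change (Zpos (p * q)) with (Z.mul (Zpos p) (Zpos q)).
rewrite !Zr_mul.
have hp := Zr_pos_neq0 p; have hq := Zr_pos_neq0 q.
by field; rewrite hp hq.
Qed.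
Lemma Q2R_eq x y : Qeq x y -> Q2R x = Q2R y.
Proof.
case: x => a p; case: y => b q; rewrite /Qeq /Q2R /= => h.
apply/eqP; rewrite eqr_div ?Zr_pos_neq0 //.
by rewrite -!Zr_mul h.
Qed.
Lemma Q2R_red x : Q2R (Qred x) = Q2R x.
Proof. exact/Q2R_eq/Qred_correct. Qed.
Lemma Q2R_0 : Q2R (Qmake 0 1) = 0.
Proof. by rewrite /Q2R /= /Zr /= mul0r. Qed.
Lemma Q2R_1 : Q2R (Qmake 1 1) = 1.
Proof. by rewrite /Q2R /= /Zr /= divr1. Qed.
Lemma Q2R_is0 x : Qeq_bool x (Qmake 0 1) -> Q2R x = 0.
Proof. by move=> /Qeq_bool_eq /Q2R_eq ->; rewrite Q2R_0. Qed.
Lemma Q2R_nat n : Q2R (Qmake (Z.of_nat n) 1) = n%:R.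
Proof. by rewrite /Q2R Zr_nat /= /Zr /= divr1. Qed.
Lemma Q2R_inv (n : nat) (p : positive) : Zpos p = Z.of_nat n -> Q2R (Qmake 1 p) = n%:R^-1.
Proof. by move=> h; rewrite /Q2R /= h Zr_nat /Zr /= mul1r. Qed.

Definition s2 : R := sqrt2 R.
Lemma s2_sq : s2 * s2 = 2.
Proof. by rewrite -expr2 /s2 /sqrt2 sqr_sqrtr // ler0n. Qed.

Definition C2R (x : C) : R := Q2R x.1 + Q2R x.2 * s2.

Lemma C2R_add x y : C2R (cadd x y) = C2R x + C2R y.
Proof. rewrite /C2R /cadd /fst /snd; cbv beta iota; rewrite !Q2R_red !Q2R_plus; ring. Qed.
Lemma C2R_mul x y : C2R (cmulc x y) = C2R x * C2R y.
Proof.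
rewrite /C2R /cmulc /fst /snd; cbv beta iota; rewrite !Q2R_red !Q2R_plus !Q2R_mult.
have -> : Q2R (Qmake 2 1) = 2 by rewrite (Q2R_nat 2).
case: x => a b; case: y => c d.
have -> : (Q2R a + Q2R b * s2) * (Q2R c + Q2R d * s2) =
  Q2R a * Q2R c + Q2R b * Q2R d * (s2 * s2) + (Q2R a * Q2R d + Q2R b * Q2R c) * s2 by ring.
rewrite s2_sq; ring.
Qed.
Lemma C2R_is0 x : cis0 x -> C2R x = 0.
Proof. by case/andP => /Q2R_is0 h1 /Q2R_is0 h2; rewrite /C2R h1 h2; ring. Qed.


Definition X0 : {mpoly R[4]} := 'X_v0.
Definition X1 : {mpoly R[4]} := 'X_v1.
Definition X2 : {mpoly R[4]} := 'X_v2.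
Definition X3 : {mpoly R[4]} := 'X_v3.

Definition monoP (m : mono) : {mpoly R[4]} :=
  let '(a,b,c,d) := m in X0 ^+ a * X1 ^+ b * X2 ^+ c * X3 ^+ d.

Definition ip (l : P) : {mpoly R[4]} := \sum_(x <- l) (C2R x.2)%:MP * monoP x.1.

Lemma ip_nil : ip [::] = 0.
Proof. by rewrite /ip big_nil. Qed.
Lemma ip_cons x l : ip (x :: l) = (C2R x.2)%:MP * monoP x.1 + ip l.
Proof. by rewrite /ip big_cons. Qed.
Lemma ip_cat l1 l2 : ip (l1 ++ l2) = ip l1 + ip l2.
Proof. by rewrite /ip big_cat. Qed.

Lemma monoP_add m n : monoP (madd m n) = monoP m * monoP n.
Proof.
case: m => [[[a b] c] d]; case: n => [[[a' b'] c'] d'] /=.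
rewrite !exprD; ring.
Qed.

Lemma ip_mul p q : ip (pmul p q) = ip p * ip q.
Proof.
rewrite /ip /pmul big_allpairs_dep mulr_suml; apply: eq_bigr => x _.
rewrite mulr_sumr; apply: eq_bigr => y _ /=.
rewrite C2R_mul rmorphM monoP_add; ring.
Qed.

Lemma ip_scale c p : ip (pscale c p) = (C2R c)%:MP * ip p.
Proof.
rewrite /ip /pscale big_map mulr_sumr; apply: eq_bigr => x _ /=.
by rewrite C2R_mul rmorphM mulrA.
Qed.

Lemma C2R_m1 : C2R (Qmake (-1) 1, Qmake 0 1) = -1.
Proof. rewrite /C2R /= Q2R_0 /Q2R /Zr /=; rewrite divr1; ring. Qed.

Lemma ip_neg p : ip (pneg p) = - ip p.
Proof. by rewrite /pneg ip_scale C2R_m1 rmorphN1 mulN1r. Qed.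

Lemma monoP0 : monoP (0,0,0,0)%N = 1.
Proof. by rewrite /= !expr0 !mulr1. Qed.

Lemma ip_const c : ip (pconst c) = (C2R c)%:MP.
Proof. by rewrite /pconst ip_cons ip_nil monoP0 mulr1 addr0. Qed.

Lemma C2R_1 : C2R (Qmake 1 1, Qmake 0 1) = 1.
Proof. by rewrite /C2R /= Q2R_0 Q2R_1 mul0r addr0. Qed.

Lemma ip_unit : ip punit = 1.
Proof. by rewrite -[punit]/(pconst _) ip_const C2R_1. Qed.

Lemma ip_pow p n : ip (ppow p n) = ip p ^+ n.
Proof.
elim: n => [|n IH]; first by rewrite expr0 /ppow /= ip_unit.
by rewrite exprS -IH /ppow iterS ip_mul.
Qed.

Lemma ip_var0 : ip (pvar 0) = X0.
Proof. by rewrite /pvar ip_cons ip_nil C2R_1 /= !expr0 expr1 !mulr1 mul1r addr0. Qed.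
Lemma ip_var1 : ip (pvar 1) = X1.
Proof. by rewrite /pvar ip_cons ip_nil C2R_1 /= !expr0 expr1 !mulr1 !mul1r addr0. Qed.
Lemma ip_var2 : ip (pvar 2) = X2.
Proof. by rewrite /pvar ip_cons ip_nil C2R_1 /= !expr0 expr1 !mulr1 !mul1r addr0. Qed.
Lemma ip_var3 : ip (pvar 3) = X3.
Proof. by rewrite /pvar ip_cons ip_nil C2R_1 /= !expr0 expr1 !mulr1 !mul1r addr0. Qed.

Lemma ip_sort (r : rel (mono * C)) p : ip (sort r p) = ip p.
Proof. by rewrite /ip (perm_big _ (permEl (perm_sort r p))). Qed.

Lemma ip_cstep x acc : ip (cstep x acc) = (C2R x.2)%:MP * monoP x.1 + ip acc.
Proof.
case: acc => [|y t] /=; first by rewrite ip_cons.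
case: eqP => [e|_]; last by rewrite ip_cons.
by rewrite !ip_cons /= C2R_add rmorphD mulrDl e addrA.
Qed.

Lemma ip_combine p : ip (combine p) = ip p.
Proof.
elim: p => [|x p IH] //=.
by rewrite ip_cstep IH ip_cons.
Qed.

Lemma ip_filter (f : pred (mono * C)) l :
  ip [seq x <- l | f x] = \sum_(x <- l | f x) (C2R x.2)%:MP * monoP x.1.
Proof. by rewrite /ip big_filter. Qed.

Lemma ip_filter0 l : ip [seq x <- l | ~~ cis0 x.2] = ip l.
Proof.
rewrite ip_filter /ip [RHS](bigID (fun x : mono * C => ~~ cis0 x.2)) /=.
rewrite [X in _ = _ + X]big1 ?addr0 // => x; rewrite negbK => /C2R_is0 ->.
by rewrite rmorph0 mul0r.
Qed.

Lemma ip_norm p : ip (pnorm p) = ip p.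
Proof. by rewrite /pnorm ip_filter0 ip_combine ip_sort. Qed.

Lemma mderivXU_ne (i j : 'I_4) : i != j -> mderiv i ('X_j : {mpoly R[4]}) = 0.
Proof. by move=> ne; rewrite mderivX mnm1E eq_sym (negbTE ne) scale0r. Qed.
Lemma mderivXU_eq (i : 'I_4) : mderiv i ('X_i : {mpoly R[4]}) = 1.
Proof.
rewrite mderivX mnm1E eqxx scale1r.
have -> : (U_(i) - U_(i) = 0)%MM by apply/mnmP => k; rewrite mnmBE mnm0E subnn.
by rewrite mpolyX0.
Qed.
Lemma mderiv1 (i : 'I_4) : mderiv i (1 : {mpoly R[4]}) = 0.
Proof. by rewrite -mpolyC1 mderivC. Qed.

Lemma mderivXn_ne (i j : 'I_4) n : i != j -> mderiv i (('X_j : {mpoly R[4]}) ^+ n) = 0.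
Proof.
move=> ne; elim: n => [|n IH]; first by rewrite expr0 mderiv1.
by rewrite exprS mderivM IH mderivXU_ne // mul0r mulr0 addr0.
Qed.
Lemma mderivXn_eq (i : 'I_4) n :
  mderiv i (('X_i : {mpoly R[4]}) ^+ n) = n%:R * 'X_i ^+ n.-1.
Proof.
elim: n => [|n IH]; first by rewrite expr0 mderiv1 mul0r.
rewrite exprS mderivM IH mderivXU_eq mul1r.
case: n {IH} => [|n] /=; first by rewrite !expr0; ring.
rewrite !exprS; ring.
Qed.

Lemma v01 : v0 != v1. Proof. by []. Qed.
Lemma v02 : v0 != v2. Proof. by []. Qed.
Lemma v03 : v0 != v3. Proof. by []. Qed.
Lemma v12 : v1 != v2. Proof. by []. Qed.
Lemma v13 : v1 != v3. Proof. by []. Qed.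
Lemma v23 : v2 != v3. Proof. by []. Qed.
Lemma v10 : v1 != v0. Proof. by []. Qed.
Lemma v20 : v2 != v0. Proof. by []. Qed.
Lemma v30 : v3 != v0. Proof. by []. Qed.
Lemma v21 : v2 != v1. Proof. by []. Qed.
Lemma v31 : v3 != v1. Proof. by []. Qed.
Lemma v32 : v3 != v2. Proof. by []. Qed.

Definition vv (k : nat) : 'I_4 :=
  match k with O => v0 | S O => v1 | S (S O) => v2 | _ => v3 end.

Lemma mderiv_mono k m : (k < 4)%N ->
  mderiv (vv k) (monoP m) = (mexp k m)%:R%:MP * monoP (mdec k m).
Proof.
case: m => [[[a b] c] d]; rewrite /monoP /X0 /X1 /X2 /X3 mpolyC_nat.
case: k => [|[|[|[|k]]]] // _ /=; rewrite !mderivM !mderivXn_eq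
  ?mderivXn_ne ?(v01, v02, v03, v12, v13, v23, v10, v20, v30, v21, v31, v32) //; ring.
Qed.

Lemma C2R_nat n : C2R (Qmake (Z.of_nat n) 1, Qmake 0 1) = n%:R.
Proof. by rewrite /C2R /= Q2R_nat Q2R_0 mul0r addr0. Qed.

Lemma ip_der k p : (k < 4)%N -> ip (pder k p) = mderiv (vv k) (ip p).
Proof.
move=> hk; rewrite /ip /pder big_map raddf_sum; apply: eq_bigr => x _ /=.
rewrite mderiv_mulC mderiv_mono // C2R_mul C2R_nat !rmorphM /=.
by rewrite mulrA [_ * (_%:R)%:MP]mulrC.
Qed.

Lemma ord_ge0 d : ord_ge d (0 : {mpoly R[4]}).
Proof. by move=> m _; rewrite mcoeff0. Qed.
Lemma ord_geD d (f g : {mpoly R[4]}) : ord_ge d f -> ord_ge d g -> ord_ge d (f + g).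
Proof. by move=> hf hg m hm; rewrite mcoeffD hf ?hg ?addr0. Qed.
Lemma ord_geN d (f : {mpoly R[4]}) : ord_ge d f -> ord_ge d (- f).
Proof. by move=> hf m hm; rewrite mcoeffN hf ?oppr0. Qed.
Lemma ord_geB d (f g : {mpoly R[4]}) : ord_ge d f -> ord_ge d g -> ord_ge d (f - g).
Proof. by move=> hf hg; apply: ord_geD => //; apply: ord_geN. Qed.
Lemma ord_ge_le d d' (f : {mpoly R[4]}) : (d' <= d)%N -> ord_ge d f -> ord_ge d' f.
Proof. by move=> hd hf m hm; apply: hf; apply: leq_trans hm hd. Qed.
Lemma ord_ge_any (f : {mpoly R[4]}) : ord_ge 0 f.
Proof. by []. Qed.
Lemma ord_geM a b (f g : {mpoly R[4]}) : ord_ge a f -> ord_ge b g -> ord_ge (a + b) (f * g).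
Proof.
move=> hf hg m hm; rewrite mcoeffM big1 // => k /eqP e.
have : (mdeg k.1 + mdeg k.2 < a + b)%N by rewrite -mdegD -e.
case: (ltnP (mdeg k.1) a) => h1 h2; first by rewrite hf ?mul0r.
rewrite hg ?mulr0 //; rewrite -(ltn_add2l (mdeg k.1)); apply: leq_trans h2 _.
by rewrite leq_add2r.
Qed.
Lemma ord_geX (i : 'I_4) : ord_ge 1 ('X_i : {mpoly R[4]}).
Proof.
move=> m hm; rewrite mcoeffX; case: eqP => // e.
by move: hm; rewrite -e mdeg1.
Qed.
Lemma ord_ge_pow a n (f : {mpoly R[4]}) : ord_ge a f -> ord_ge (a * n) (f ^+ n).
Proof.
move=> hf; elim: n => [|n IH]; first by rewrite muln0.
by rewrite exprS mulnS; apply: ord_geM.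
Qed.
Lemma ord_ge_mono m : ord_ge (mdegc m) (monoP m).
Proof.
case: m => [[[a b] c] d] /=; rewrite /X0 /X1 /X2 /X3.
have h := ord_geM (ord_geM (ord_geM (ord_ge_pow (n:=a) (ord_geX v0)) (ord_ge_pow (n:=b) (ord_geX v1)))
  (ord_ge_pow (n:=c) (ord_geX v2))) (ord_ge_pow (n:=d) (ord_geX v3)).
by rewrite !mul1n in h.
Qed.
Lemma ord_ge_Cmul a c (f : {mpoly R[4]}) : ord_ge a f -> ord_ge a (c%:MP * f).
Proof. by move=> hf m hm; rewrite mcoeffCM hf ?mulr0. Qed.
Lemma ord_ge_deriv a (i : 'I_4) (f : {mpoly R[4]}) : ord_ge a f -> ord_ge a.-1 (mderiv i f).
Proof.
move=> hf m hm; rewrite mcoeff_mderiv hf ?mul0rn //.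
rewrite mdegD mdeg1 addn1; case: a hf hm => // a _ /=.
Qed.

Lemma ip_filter_split (f : pred (mono * C)) l :
  ip l = ip [seq x <- l | f x] + ip [seq x <- l | ~~ f x].
Proof. by rewrite !ip_filter /ip [LHS](bigID f). Qed.

Lemma ord_ge_ip_hi N l : ord_ge N (ip [seq x <- l | ~~ (mdegc x.1 < N)%N]).
Proof.
elim: l => [|x l IH] /=; first by rewrite ip_nil; apply: ord_ge0.
case: ifP => h //; rewrite ip_cons; apply: ord_geD => //.
apply: ord_ge_Cmul; apply: (@ord_ge_le (mdegc x.1)); last exact: ord_ge_mono.
by rewrite leqNgt h.
Qed.

Lemma ip_trunc N l : ord_ge N (ip l - ip (ptrunc N l)).
Proof.
rewrite (ip_filter_split (fun x : mono * C => (mdegc x.1 < N)%N) l) /ptrunc.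
by rewrite addrC addKr; apply: ord_ge_ip_hi.
Qed.

Lemma ord_ge_ip_nil N l : ptrunc N l = [::] -> ord_ge N (ip l).
Proof.
move=> h; have := ip_trunc (N:=N) l; rewrite h ip_nil subr0; exact.
Qed.

Lemma pbracketB (f g W : {mpoly R[4]}) : pbracket f W - pbracket g W = pbracket (f - g) W.
Proof. rewrite /pbracket !mderivB; ring. Qed.

Lemma br_compat (W f g : {mpoly R[4]}) : ord_ge 3 W -> ord_ge 12 (f - g) ->
  ord_ge 12 (pbracket f W - pbracket g W).
Proof.
move=> hW hfg; rewrite pbracketB /pbracket.
have hm i j : ord_ge 12 (mderiv i (f - g) * mderiv j W).
  apply: (@ord_ge_le 13) => //.
  exact: (ord_geM (ord_ge_deriv i hfg) (ord_ge_deriv j hW)).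
by apply: ord_geD; apply: ord_geB; apply: hm.
Qed.

Lemma ip_cbrr p w : ip (cbrr p w) = pbracket (ip p) (ip w).
Proof.
rewrite /cbrr !ip_cat !ip_neg !ip_mul !ip_der // /pbracket /=; ring.
Qed.

Lemma cbr_sound f p w : ord_ge 3 (ip w) -> ord_ge 12 (f - ip p) ->
  ord_ge 12 (pbracket f (ip w) - ip (cbr p w)).
Proof.
move=> hW hf; rewrite /cbr ip_norm.
have -> : pbracket f (ip w) - ip (ptrunc 12 (cbrr p w)) =
  (pbracket f (ip w) - pbracket (ip p) (ip w)) + (ip (cbrr p w) - ip (ptrunc 12 (cbrr p w))).
  by rewrite ip_cbrr; ring.
apply: ord_geD; first exact: br_compat.
exact: ip_trunc.
Qed.

Lemma Zr_factp n : Zr (Zpos (factp n)) = n`!%:R.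
Proof.
elim: n => [|n IH] //=.
change (Zpos (Pos.of_succ_nat n * factp n)) with (Z.mul (Zpos (Pos.of_succ_nat n)) (Zpos (factp n))).
by rewrite Zr_mul IH Zr_pos SuccNat2Pos.id_succ factS natrM.
Qed.

Lemma C2R_ck n : C2R (ck n) = n`!%:R^-1.
Proof. by rewrite /C2R /ck /= Q2R_0 mul0r addr0 /Q2R /= Zr_factp /Zr /= mul1r. Qed.

Lemma C2R_inv (n : nat) (p : positive) : Zpos p = Z.of_nat n ->
  C2R (Qmake 1 p, Qmake 0 1) = n%:R^-1.
Proof. by move=> h; rewrite /C2R /= Q2R_0 mul0r addr0 (Q2R_inv h). Qed.
Lemma C2R_sinv (n : nat) (p : positive) : Zpos p = Z.of_nat n ->
  C2R (Qmake 0 1, Qmake 1 p) = sqrt2 R / n%:R.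
Proof. by move=> h; rewrite /C2R /= Q2R_0 add0r (Q2R_inv h) mulrC. Qed.
Lemma C2R_s : C2R (Qmake 0 1, Qmake 1 1) = sqrt2 R.
Proof. by rewrite /C2R /= Q2R_0 add0r Q2R_1 mul1r. Qed.

Lemma chg0 : (chg R)`_0 = ((root4_2 R)^-1 / sqrt2 R)%:MP * ('X_v0 - 'X_v2). Proof. by []. Qed.
Lemma chg1 : (chg R)`_1 = ((root4_2 R)^-1 / sqrt2 R)%:MP * ('X_v1 - 'X_v3). Proof. by []. Qed.
Lemma chg2 : (chg R)`_2 = (root4_2 R / sqrt2 R)%:MP * ('X_v0 + 'X_v2). Proof. by []. Qed.
Lemma chg3 : (chg R)`_3 = (root4_2 R / sqrt2 R)%:MP * ('X_v1 + 'X_v3). Proof. by []. Qed.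
Lemma sqM (c : R) (X : {mpoly R[4]}) : (c%:MP * X) * (c%:MP * X) = (c * c)%:MP * (X * X).
Proof. by rewrite mulrACA rmorphM. Qed.
Lemma compM (p q : {mpoly R[4]}) (lq : 4.-tuple {mpoly R[4]}) :
  (p * q) \mPo lq = (p \mPo lq) * (q \mPo lq).
Proof. exact: rmorphM. Qed.
Lemma compXn (p : {mpoly R[4]}) (lq : 4.-tuple {mpoly R[4]}) n :
  (p ^+ n) \mPo lq = (p \mPo lq) ^+ n.
Proof. exact: rmorphXn. Qed.

Lemma s_neq0 : sqrt2 R != 0.
Proof. by rewrite /sqrt2 lt0r_neq0 // sqrtr_gt0 ltr0n. Qed.
Lemma r_sq : root4_2 R * root4_2 R = sqrt2 R.
Proof. by rewrite -expr2 /root4_2 sqr_sqrtr // sqrtr_ge0. Qed.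

Lemma c2c2 : (root4_2 R / sqrt2 R) * (root4_2 R / sqrt2 R) = C2R (Qmake 0 1, Qmake 1 2).
Proof.
rewrite (@C2R_sinv 2 2 erefl) mulrACA -invfM r_sq -/s2 s2_sq //.
Qed.
Lemma c1c1 : ((root4_2 R)^-1 / sqrt2 R) * ((root4_2 R)^-1 / sqrt2 R) = C2R (Qmake 0 1, Qmake 1 4).
Proof.
rewrite (@C2R_sinv 4 4 erefl) mulrACA -!invfM r_sq -/s2 s2_sq.
have hs : s2 != 0 by exact: s_neq0.
have h2 : (2 : R) != 0 by rewrite pnatr_eq0.
rewrite invfM.
have -> : s2^-1 = s2 / 2.
  by apply: (mulfI hs); rewrite mulrA s2_sq divff // mulfV.
by rewrite -mulrA -invfM -natrM.
Qed.

Lemma ip_eq_check A B : pnorm (A ++ pneg B) = [::] -> ip A = ip B.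
Proof.
move=> h; have := ip_norm (A ++ pneg B); rewrite h ip_nil ip_cat ip_neg.
by move/esym/eqP; rewrite subr_eq0 => /eqP.
Qed.

Lemma Hqp_ip : ip cHqp = Hqp R.
Proof.
rewrite /cHqp /cJ1 /cq1 /cq2 /cp1 /cp2 !(ip_cat, ip_mul, ip_pow, ip_neg, ip_const, ip_var0, ip_var1, ip_var2, ip_var3).
rewrite C2R_s (@C2R_inv 8 8 erefl) C2R_nat.
rewrite /Hqp /J1 /q1 /q2 /p1 /p2 /X0 /X1 /X2 /X3; ring.
Qed.

Lemma Hbar_ip : ip cHbar = Hbar R.
Proof.
rewrite /cHbar /cJ1 /cJ2 /cq1 /cq2 /cp1 /cp2 !(ip_cat, ip_mul, ip_pow, ip_neg, ip_const, ip_var0, ip_var1, ip_var2, ip_var3).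
rewrite C2R_s (@C2R_inv 4 4 erefl) (@C2R_inv 256 256 erefl) (@C2R_sinv 32 32 erefl)
  (@C2R_sinv 4096 4096 erefl) !C2R_nat.
rewrite /Hbar /J1 /J2 /q1 /q2 /p1 /p2 /X0 /X1 /X2 /X3; ring.
Qed.

Lemma Hxy_ip : Hxy R \mPo chg R = ip cHxy.
Proof.
rewrite /Hxy; cbv zeta.
rewrite !(comp_mpolyD, comp_mpolyB, comp_mpolyN, compM, compXn, comp_mpolyC, comp_mpolyXU).
rewrite chg0 chg1 chg2 chg3 !sqM c1c1 c2c2.
rewrite /cHxy /cq1 /cq2 /cp1 /cp2 !(ip_cat, ip_mul, ip_pow, ip_neg, ip_const, ip_var0, ip_var1, ip_var2, ip_var3).
rewrite (@C2R_inv 2 2 erefl) /X0 /X1 /X2 /X3; ring.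
Qed.
End Sem.

Theorem theorem3 (R : rcfType) :
  Hxy R \mPo chg R = Hqp R /\
  exists W : {mpoly R[4]},
    ord_ge 3 W /\ ord_ge 12 (lie_series W (Hqp R) 12 - Hbar R).
Proof.
split.
  by rewrite Hxy_ip -Hqp_ip; apply: ip_eq_check; vm_compute; reflexivity.
exists (ip R cW).
have hW : ord_ge 3 (ip R cW) by apply: ord_ge_ip_nil; vm_compute; reflexivity.
split => //.
set F := fun f => pbracket f (ip R cW).
have Hit : forall k, ord_ge 12 (iter k F (Hqp R) - ip R (citer k)).
  elim => [|k IH] /=.
    by rewrite ip_norm Hqp_ip subrr; apply: ord_ge0.
  exact: cbr_sound.
have Hsum : forall n k0, ord_ge 12 (\sum_(k0 <= j < k0 + n) (j`!%:R^-1 : R) *: iter j F (Hqp R)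
     - ip R (csumA n k0 (citer k0))).
  elim => [|n IH] k0.
    by rewrite addn0 big_geq // ip_nil subr0; apply: ord_ge0.
  rewrite big_ltn; last by rewrite addnS ltnS leq_addr.
  rewrite -addSnnS /= ip_cat ip_scale C2R_ck.
  have -> : forall a b c d : {mpoly R[4]}, (a + b) - (c + d) = (a - c) + (b - d)
    by move=> a b c d; ring.
  apply: ord_geD; last exact: (IH k0.+1).
  by rewrite -mul_mpolyC -mulrBr; apply: ord_ge_Cmul; apply: Hit.
have := Hsum 12%N 0%N; rewrite add0n big_mkord => h.
have -> : lie_series (ip R cW) (Hqp R) 12 - Hbar R =
  (lie_series (ip R cW) (Hqp R) 12 - ip R (csumA 12 0 (citer 0)))
  + (ip R (csumA 12 0 (citer 0)) - ip R cHbar) by rewrite Hbar_ip; ring.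
apply: ord_geD; first exact: h.
rewrite -ip_neg -ip_cat -ip_norm; apply: ord_ge_ip_nil.
vm_compute; reflexivity.
Qed.
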